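(* Let $u\in\Lambda$ with $G^{>}_u\neq\emptyset$. Then there exist $a>0$, $b\in(0,1)$ and $c\in\mathbb R$ such that: (1) $\{k\in\mathbb N: u_k>c\}\neq\emptyset$; (2) $u_k\le ab^k+c$ for all $k\in\mathbb N$; (3) $u_{\mathbf K^s_u}=ab^{\mathbf K^s_u}+c$.
   Context: For a real sequence $u=(u_k)_{k\in\mathbb N}$: $\Lambda$ is the set of real sequences with $\sup_n u_n<+\infty$; $G^{>}_u=\{k\in\mathbb N: u_k>\limsup_{n\to\infty}u_n\}$; $\Delta^s_u=\{k\in\mathbb N:\max_{0\le j\le k}u_j>\sup_{j>k}u_j\}$ and $\mathbf K^s_u=\inf\Delta^s_u$ (with $\inf\emptyset=+\infty$). *)

(* Defs.v *)
From Stdlib Require Import Reals.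
From Coquelicot Require Import Coquelicot.
Open Scope R_scope.

Definition in_Lambda (u : nat -> R) : Prop := exists M : R, forall n, u n <= M.

Fixpoint prefix_max (u : nat -> R) (k : nat) : R :=
  match k with
  | O => u O
  | S k' => Rmax (prefix_max u k') (u (S k'))
  end.

Definition tail_sup (u : nat -> R) (k : nat) : Rbar := Sup_seq (fun n => u (n + S k)%nat).

Definition G_gt (u : nat -> R) (k : nat) : Prop := Rbar_lt (LimSup_seq u) (Finite (u k)).

Definition Delta_s (u : nat -> R) (k : nat) : Prop :=
  Rbar_lt (tail_sup u k) (Finite (prefix_max u k)).

(* K is the infimum (= least element) of Delta^s_u, in particular Delta^s_u is nonempty *)
Definition is_Ks (u : nat -> R) (K : nat) : Prop :=
  Delta_s u K /\ forall k, Delta_s u k -> (K <= k)%nat.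

(* Main.v *)
Require Import Defs.
From Stdlib Require Import Reals.
From Coquelicot Require Import Coquelicot.
From Stdlib Require Import Lra Lia Wf_nat Classical.
Open Scope R_scope.

Lemma sup_le_R (f : nat -> Rbar) (x : Rbar) :
  (forall n, Rbar_le (f n) x) -> Rbar_le (Sup_seq f) x.
Proof.
  intros H. destruct (is_sup_seq_lub f _ (Sup_seq_correct f)) as [_ H2].
  apply H2. intros y [n ->]. apply H.
Qed.

Lemma sup_ub (f : nat -> Rbar) n : Rbar_le (f n) (Sup_seq f).
Proof.
  destruct (is_sup_seq_lub f _ (Sup_seq_correct f)) as [H1 _].
  apply H1. exists n; reflexivity.
Qed.

Lemma inf_lt (f : nat -> Rbar) (x : Rbar) :
  Rbar_lt (Inf_seq f) x -> exists m, Rbar_lt (f m) x.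
Proof.
  intros H. apply NNPP. intros Hn.
  destruct (is_inf_seq_glb f _ (Inf_seq_correct f)) as [_ H2].
  assert (Rbar_le x (Inf_seq f)).
  { apply H2. intros y [n ->]. apply Rbar_not_lt_le. intros Hc. apply Hn. now exists n. }
  apply (Rbar_le_not_lt _ _ H0 H).
Qed.

Lemma pm_ge (u : nat -> R) j k : (j <= k)%nat -> u j <= prefix_max u k.
Proof.
  induction k; intros Hjk.
  - replace j with 0%nat by lia. simpl; lra.
  - simpl. destruct (Nat.eq_dec j (S k)) as [->|Hne].
    + apply Rmax_r.
    + apply Rle_trans with (prefix_max u k). apply IHk; lia. apply Rmax_l.
Qed.

Lemma sup_shift_lt (f : nat -> R) (x : R) :
  f 0%nat < x -> Rbar_lt (Sup_seq (fun n => Finite (f (S n)))) x ->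
  Rbar_lt (Sup_seq (fun n => Finite (f n))) x.
Proof.
  intros H0 H1.
  pose proof (fun n => sup_ub (fun n => Finite (f (S n))) n) as Hub.
  set (T := Sup_seq (fun n => Finite (f (S n)))) in *.
  clearbody T. destruct T as [t| |]; simpl in H1; try contradiction.
  - apply Rbar_le_lt_trans with (Finite (Rmax (f 0%nat) t)).
    + apply sup_le_R. intros [|n]; simpl. apply Rmax_l.
      apply Rle_trans with t; [ | apply Rmax_r]. apply (Hub n).
    + simpl. apply Rmax_lub_lt; lra.
  - specialize (Hub 0%nat). simpl in Hub. contradiction.
Qed.

Lemma between (T : Rbar) (M : R) : Rbar_lt T M -> exists c : R, Rbar_lt T c /\ c < M.
Proof.
  destruct T as [t| |]; simpl; intros H; try contradiction.
  - exists ((t + M)/2). simpl. split; lra.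
  - exists (M - 1). simpl. split; [exact I | lra].
Qed.

Theorem mainTheorem3 (u : nat -> R) :
  in_Lambda u ->
  (exists k, G_gt u k) ->
  exists a b c : R,
    0 < a /\ 0 < b < 1 /\
    (exists k, u k > c) /\
    (forall k, u k <= a * b ^ k + c) /\
    (exists K, is_Ks u K /\ u K = a * b ^ K + c).
Proof.
  intros _ [k0 HG]. unfold G_gt in HG.
  rewrite LimSup_InfSup_seq in HG.
  destruct (inf_lt _ _ HG) as [m Hm].
  assert (HD : exists k, Delta_s u k).
  { exists (m + k0)%nat. unfold Delta_s, tail_sup.
    apply Rbar_le_lt_trans with (Sup_seq (fun n : nat => Finite (u (n + m)%nat))).
    - apply sup_le_R. intros n.
      replace (n + S (m + k0))%nat with ((n + S k0) + m)%nat by lia.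
      apply (sup_ub (fun n => Finite (u (n + m)%nat))).
    - eapply Rbar_lt_le_trans. exact Hm. simpl. apply pm_ge. lia. }
  destruct (dec_inh_nat_subset_has_unique_least_element (Delta_s u)
              (fun n => classic _) HD) as [K [[HK Hmin] _]].
  assert (HuK : prefix_max u K = u K).
  { destruct K as [|K']. reflexivity.
    simpl. destruct (Rle_dec (prefix_max u K') (u (S K'))) as [Hle|Hlt].
    - now apply Rmax_right.
    - exfalso. apply Rnot_le_lt in Hlt.
      assert (Hmax : Rmax (prefix_max u K') (u (S K')) = prefix_max u K')
        by (apply Rmax_left; lra).
      assert (HD' : Delta_s u K').
      { unfold Delta_s, tail_sup.
        apply (sup_shift_lt (fun n => u (n + S K')%nat)).
        - simpl. exact Hlt.
        - unfold Delta_s, tail_sup in HK. simpl prefix_max in HK. rewrite Hmax in HK.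
          rewrite (Sup_seq_ext _ (fun n => Finite (u (n + S (S K'))%nat))).
          exact HK. intros n. f_equal. f_equal. lia. }
      specialize (Hmin K' HD'). lia. }
  pose proof HK as HK'. unfold Delta_s in HK'. rewrite HuK in HK'.
  destruct (between _ _ HK') as [c [HTc HcM]].
  set (b := /2). assert (Hb : 0 < b < 1) by (unfold b; lra).
  assert (HbK : 0 < b ^ K) by (apply pow_lt; lra).
  set (a := (u K - c) / b ^ K).
  assert (Ha : 0 < a) by (unfold a; apply Rdiv_lt_0_compat; lra).
  assert (Heq : a * b ^ K + c = u K) by (unfold a; field; lra).
  exists a, b, c. split; [exact Ha|]. split; [exact Hb|]. split.
  { exists K. lra. }
  split.
  - intros k. destruct (Compare_dec.le_lt_dec k K) as [Hk|Hk].
    + apply Rle_trans with (u K). rewrite <- HuK. apply pm_ge; exact Hk.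
      rewrite <- Heq. apply Rplus_le_compat_r. apply Rmult_le_compat_l; [lra|].
      replace K with (k + (K - k))%nat by lia. rewrite pow_add.
      assert (0 < b ^ k) by (apply pow_lt; lra).
      assert (b ^ (K - k) <= 1).
      { rewrite <- (pow1 (K - k)). apply pow_incr. lra. }
      nra.
    + assert (Hle : Rbar_le (u k) (tail_sup u K)).
      { unfold tail_sup. replace k with ((k - S K) + S K)%nat at 1 by lia.
        apply (sup_ub (fun n => Finite (u (n + S K)%nat))). }
      assert (Hlt : Rbar_lt (u k) c) by (eapply Rbar_le_lt_trans; eauto).
      simpl in Hlt. assert (0 < a * b ^ k) by (apply Rmult_lt_0_compat; [lra| apply pow_lt; lra]).
      lra.
  - exists K. split. split; assumption. lra.
Qed.
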